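(* Let $\mathcal{T}$ obey the LC-PF model and covariance assumption of the context. 1. If node $b$ is the parent of nodes $a$ and $c$, then $\phi_{ab}=\sum_{d\in\mathcal{D}^a}\big(r_{ab}^2\Omega_p(d,d)+x_{ab}^2\Omega_q(d,d)+2r_{ab}x_{ab}\Omega_{pq}(d,d)\big)$ and $\phi_{ac}=\sum_{d\in\mathcal{D}^a}\big(r_{ab}^2\Omega_p(d,d)+x_{ab}^2\Omega_q(d,d)+2r_{ab}x_{ab}\Omega_{pq}(d,d)\big)+\sum_{d\in\mathcal{D}^c}\big(r_{bc}^2\Omega_p(d,d)+x_{bc}^2\Omega_q(d,d)+2r_{bc}x_{bc}\Omega_{pq}(d,d)\big)$. 2. If node $g$ is the parent of node $b$, and $b$ is the parent of nodes $a$ and $c$, then $\phi_{ag}-\phi_{cg}=\sum_{d\in\mathcal{D}^a}\big[\Omega_p(d,d)(r_{ab}^2+2r_{ab}r_{bg})+\Omega_q(d,d)(x_{ab}^2+2x_{ab}x_{bg})+2\Omega_{pq}(d,d)(r_{ab}x_{ab}+r_{bg}x_{ab}+r_{ab}x_{bg})\big]-\sum_{d\in\mathcal{D}^c}\big[\Omega_p(d,d)(r_{cb}^2+2r_{cb}r_{bg})+\Omega_q(d,d)(x_{cb}^2+2x_{cb}x_{bg})+2\Omega_{pq}(d,d)(r_{cb}x_{cb}+r_{bg}x_{cb}+r_{cb}x_{bg})\big]$, $\phi_{ag}=\sum_{d\in\mathcal{D}^a}\big[\Omega_p(d,d)(r_{ab}+r_{bg})^2+2\Omega_{pq}(d,d)(r_{ab}+r_{bg})(x_{ab}+x_{bg})+\Omega_q(d,d)(x_{ab}+x_{bg})^2\big]+\sum_{d\in\mathcal{D}^b\setminus\mathcal{D}^a}\big[\Omega_p(d,d)r_{bg}^2+\Omega_q(d,d)x_{bg}^2+2\Omega_{pq}(d,d)r_{bg}x_{bg}\big]$,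 $\phi^\theta_{ag}=\sum_{d\in\mathcal{D}^a}\big[\Omega_p(d,d)(x_{ab}+x_{bg})^2-2\Omega_{pq}(d,d)(r_{ab}+r_{bg})(x_{ab}+x_{bg})+\Omega_q(d,d)(r_{ab}+r_{bg})^2\big]+\sum_{d\in\mathcal{D}^b\setminus\mathcal{D}^a}\big[\Omega_p(d,d)x_{bg}^2+\Omega_q(d,d)r_{bg}^2-2\Omega_{pq}(d,d)r_{bg}x_{bg}\big]$, $\phi^{v\theta}_{ag}=\sum_{d\in\mathcal{D}^a}\big[(\Omega_p(d,d)-\Omega_q(d,d))(r_{ab}+r_{bg})(x_{ab}+x_{bg})+\Omega_{pq}(d,d)(x_{ab}+x_{bg})^2-\Omega_{pq}(d,d)(r_{ab}+r_{bg})^2\big]+\sum_{d\in\mathcal{D}^b\setminus\mathcal{D}^a}\big[(\Omega_p(d,d)-\Omega_q(d,d))r_{bg}x_{bg}+\Omega_{pq}(d,d)(x_{bg}^2-r_{bg}^2)\big]$.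
   Context: $\mathcal{T}=(\mathcal{V},\mathcal{E})$ is a tree with a distinguished root (substation) of degree one. Each edge $(ab)$ has resistance $r_{ab}=r_{ba}>0$ and reactance $x_{ab}=x_{ba}>0$. For a node $a$, $\mathcal{P}^a$ is the set of edges on the path from $a$ to the root. The descendant set $\mathcal{D}^a$ is the set of nodes $c$ with $\mathcal{P}^a\subseteq\mathcal{P}^c$, including $a$. If $a\in\mathcal{D}^b$ and $(ab)\in\mathcal{E}$, then $b$ is the parent of $a$. Let $H_{1/r},H_{1/x}$ be the weighted Laplacians of $\mathcal{T}$ with edge weights $1/r_{ab}$, $1/x_{ab}$, with the root row and column removed. Non-root nodes have random injections $p_a,q_a$. The LC-PF model gives the voltage magnitude deviations $v=H_{1/r}^{-1}p+H_{1/x}^{-1}q$ and phases $\theta=H_{1/x}^{-1}p-H_{1/r}^{-1}q$ at non-root nodes; the root magnitude and phase are constants. Covariance assumption: $\Omega_p,\Omega_q$ are the covariances of $p,q$, and $\Omega_{pq}=\mathbb{E}[(p-\mathbb{E}p)(q-\mathbb{E}q)^T]=\Omega_{qp}^T$. For distinct non-root $a,b$, $\Omega_p(a,b)=\Omega_q(a,b)=\Omega_{qp}(a,b)=0$, and $\Omega_{qp}(a,a)\ge0$. Writing $\tilde v_a=v_a-\mathbb{E}v_a$ and $\tilde\theta_a=\theta_a-\mathbb{E}\theta_a$, define: - $\phi_{ab}=\mathbb{E}[(\tilde v_a-\tilde v_b)^2]$, - $\phi^\theta_{ab}=\mathbb{E}[(\tilde\theta_a-\tilde\theta_b)^2]$,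 - $\phi^{v\theta}_{ab}=\mathbb{E}[(\tilde v_a-\tilde v_b)(\tilde\theta_a-\tilde\theta_b)]$. *)

(* Defs.v *)
From HB Require Import structures.
From mathcomp Require Import all_boot all_order all_algebra.
From mathcomp Require Import all_classical all_reals all_analysis.
Set Implicit Arguments. Unset Strict Implicit. Unset Printing Implicit Defensive.
Import Order.TTheory GRing.Theory Num.Theory.
Local Open Scope ring_scope.

(* The node set is 'I_n.+1, the root (substation) is ord0.  The tree is     *)
(* given by a parent map [par]; its edge set is                             *)
(*    E = { {c, par c} | c <> root },                                      *)
(* and it is a tree rooted at ord0 iff every node reaches ord0 by iterating *)
(* [par] (with the normalising convention par root = root).                 *)

Definition tedge (n : nat) (par : 'I_n.+1 -> 'I_n.+1) (a b : 'I_n.+1) : bool :=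
  ((a != ord0) && (par a == b)) || ((b != ord0) && (par b == a)).

Definition rooted_tree (n : nat) (par : 'I_n.+1 -> 'I_n.+1) : Prop :=
  par ord0 = ord0 /\ (forall a : 'I_n.+1, exists k : nat, iter k par a = ord0).

Definition root_deg_one (n : nat) (par : 'I_n.+1 -> 'I_n.+1) : Prop :=
  #|[set c | tedge par ord0 c]| = 1%N.

(* P^a : the set of edges (as unordered pairs) on the path from a to the root *)
Definition path_edges (n : nat) (par : 'I_n.+1 -> 'I_n.+1) (a : 'I_n.+1)
  : {set {set 'I_n.+1}} :=
  [set [set c; par c] | c in
     [set c | (c != ord0) && [exists k : 'I_n.+1, iter k par a == c]]].

Definition desc (n : nat) (par : 'I_n.+1 -> 'I_n.+1) (a : 'I_n.+1)
  : {set 'I_n.+1} :=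
  [set c | path_edges par a \subset path_edges par c].

Definition is_parent (n : nat) (par : 'I_n.+1 -> 'I_n.+1) (b a : 'I_n.+1)
  : bool := tedge par a b && (a \in desc par b).

(* Weighted Laplacians (edge weights 1/w_ab) and their reduced versions     *)
(* (root row and column removed; non-root node [lift ord0 i] <-> i : 'I_n). *)

Definition laplacian (R : realType) (n : nat) (par : 'I_n.+1 -> 'I_n.+1)
  (w : 'I_n.+1 -> 'I_n.+1 -> R) : 'M[R]_n.+1 :=
  \matrix_(i, j) (if i == j then \sum_(k | tedge par i k) (w i k)^-1
                  else if tedge par i j then - (w i j)^-1 else 0).

Definition red_laplacian (R : realType) (n : nat) (par : 'I_n.+1 -> 'I_n.+1)
  (w : 'I_n.+1 -> 'I_n.+1 -> R) : 'M[R]_n :=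
  \matrix_(i, j) laplacian par w (lift ord0 i) (lift ord0 j).

(* LC-PF model.  p, q : node -> random variable (only non-root values used). *)

Definition lcpf_v {d} {T : measurableType d} (R : realType) (n : nat)
  (par : 'I_n.+1 -> 'I_n.+1) (r x : 'I_n.+1 -> 'I_n.+1 -> R)
  (p q : 'I_n.+1 -> T -> R) (v0 : R) (a : 'I_n.+1) : T -> R :=
  fun w => match unlift ord0 a with
           | Some i => \sum_(j < n) invmx (red_laplacian par r) i j * p (lift ord0 j) w
                     + \sum_(j < n) invmx (red_laplacian par x) i j * q (lift ord0 j) w
           | None => v0
           end.

Definition lcpf_theta {d} {T : measurableType d} (R : realType) (n : nat)
  (par : 'I_n.+1 -> 'I_n.+1) (r x : 'I_n.+1 -> 'I_n.+1 -> R)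
  (p q : 'I_n.+1 -> T -> R) (th0 : R) (a : 'I_n.+1) : T -> R :=
  fun w => match unlift ord0 a with
           | Some i => \sum_(j < n) invmx (red_laplacian par x) i j * p (lift ord0 j) w
                     - \sum_(j < n) invmx (red_laplacian par r) i j * q (lift ord0 j) w
           | None => th0
           end.

Definition centred {d} {T : measurableType d} {R : realType}
  (P : probability T R) (X : T -> R) : T -> R :=
  X \- cst (fine ('E_P[X])%E).

(* phi^{XY}_{ab} = E[ (X~_a - X~_b) (Y~_a - Y~_b) ];
   phi = phiE v v, phi^theta = phiE th th, phi^{v theta} = phiE v th *)
Definition phiE {d} {T : measurableType d} {R : realType} {V : Type}
  (P : probability T R) (X Y : V -> T -> R) (a b : V) : \bar R :=
  ('E_P[(centred P (X a) \- centred P (X b)) * (centred P (Y a) \- centred P (Y b))])%E.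

Definition Omega {d} {T : measurableType d} {R : realType} {V : Type}
  (P : probability T R) (X Y : V -> T -> R) (a b : V) : \bar R :=
  covariance P (X a) (Y b).

(* Main.v *)
Require Import Defs.
From HB Require Import structures.
From mathcomp Require Import all_boot all_order all_algebra.
From mathcomp Require Import all_classical all_reals all_analysis.
From mathcomp Require Import ring lra zify.
Import Order.TTheory GRing.Theory Num.Theory.
Local Open Scope ring_scope.
Set Implicit Arguments. Unset Strict Implicit. Unset Printing Implicit Defensive.
Section Tree.
Variable n : nat.
Variable par : 'I_n.+1 -> 'I_n.+1.
Hypothesis par0 : par ord0 = ord0.
Hypothesis reach : forall a, exists k, iter k par a = ord0.

Lemma iter_root k : iter k par ord0 = ord0.
Proof. by elim: k => //= k ->. Qed.

Lemma iter_mul k t a : iter k par a = a -> iter (k * t) par a = a.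
Proof.
move=> h; elim: t => [|t IH]; first by rewrite muln0.
by rewrite mulnS iterD IH h.
Qed.

Lemma periodic_root a k : (0 < k)%N -> iter k par a = a -> a = ord0.
Proof.
move=> k0 h; have [K hK] := reach a.
have e := iter_mul K h.
have ek : (k * K = (k * K - K) + K)%N by rewrite subnK // leq_pmull.
by rewrite ek iterD hK iter_root in e; rewrite -e.
Qed.

Definition anc (c a : 'I_n.+1) := exists k, iter k par a = c.

Lemma anc_refl a : anc a a. Proof. by exists 0%N. Qed.
Lemma anc_par a : anc (par a) a. Proof. by exists 1%N. Qed.

Lemma anc_trans a b c : anc a b -> anc b c -> anc a c.
Proof. by move=> [k hk] [m hm]; exists (k + m)%N; rewrite iterD hm. Qed.

Lemma anc_antisym a c : anc c a -> anc a c -> a = c.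
Proof.
move=> [k hk] [m hm].
have e : iter (m + k) par a = a by rewrite iterD hk.
case: (posnP (m + k)) => [/eqP|] h.
  by move: h; rewrite addn_eq0 => /andP[_ /eqP k0]; rewrite -hk k0.
have a0 := periodic_root h e.
by rewrite -hk a0 iter_root.
Qed.

Lemma par_fix a : par a = a -> a = ord0.
Proof. by move=> h; apply: (@periodic_root a 1%N). Qed.

Lemma anc_root a : anc a ord0 -> a = ord0.
Proof. by move=> [k <-]; rewrite iter_root. Qed.

Lemma anc_chain a c j : anc a j -> anc c j -> anc a c \/ anc c a.
Proof.
move=> [k hk] [m hm]; case: (leqP k m) => km.
  by right; exists (m - k)%N; rewrite -hk -iterD subnK.
by left; exists (k - m)%N; rewrite -hm -iterD subnK // ltnW.
Qed.

Lemma anc_step c a : anc c a -> c = a \/ anc c (par a).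
Proof.
move=> [[|k] hk]; first by left.
by right; exists k; rewrite -iterSr.
Qed.

Lemma not_anc_par a : a != ord0 -> ~ anc a (par a).
Proof.
move=> a0 h; have e := anc_antisym (anc_par a) h.
by move: a0; rewrite (par_fix (esym e)) eqxx.
Qed.

Definition ancb (c a : 'I_n.+1) : bool := [exists k : 'I_n.+1, iter k par a == c].

Lemma depth_bound a : exists2 K, (K <= n)%N & iter K par a = ord0.
Proof.
have ex : exists k, iter k par a == ord0 by have [k hk] := reach a; exists k; apply/eqP.
case: (ex_minnP ex) => K /eqP hK hmin.
exists K => //.
have inj : injective (fun i : 'I_K.+1 => iter i par a).
  move=> i j /= e; apply/eqP; apply: contraT => ne.
  wlog lt : i j e ne / (i < j)%N.
    move=> W; case: (ltngtP i j) => h; first exact: W h.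
      by apply: (W j i) => //; rewrite eq_sym.
    by move: ne; rewrite (val_inj h) eqxx.
  have jK : (j <= K)%N by rewrite -ltnS ltn_ord.
  have : (K <= K - j + i)%N.
    apply: hmin; apply/eqP; rewrite iterD e -iterD subnK //.
  lia.
have := @leq_card _ _ _ inj; rewrite !card_ord; lia.
Qed.

Lemma ancP c a : reflect (anc c a) (ancb c a).
Proof.
apply: (iffP existsP) => [[k /eqP hk]|[k hk]]; first by exists k.
have [K Kn hK] := depth_bound a.
case: (leqP k K) => kK.
  by exists (Ordinal (leq_ltn_trans kK (leq_ltn_trans Kn (ltnSn n)))); rewrite /= hk.
exists (Ordinal (leq_ltn_trans Kn (ltnSn n))); apply/eqP => /=.
by rewrite -hk -(subnK (ltnW kK)) iterD hK iter_root.
Qed.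


Lemma edge_inj c c' : c != ord0 -> c' != ord0 ->
  [set c; par c] = [set c'; par c'] -> c = c'.
Proof.
move=> c0 c'0 E.
have : c \in [set c'; par c'] by rewrite -E set21.
rewrite in_set2 => /orP[/eqP // | /eqP h1].
have : c' \in [set c; par c] by rewrite E set21.
rewrite in_set2 => /orP[/eqP -> // | /eqP h2].
have : iter 2 par c = c by rewrite /= -h2 -h1.
by move/(periodic_root (isT : (0 < 2)%N))=> e; rewrite e eqxx in c0.
Qed.

Lemma path_edgesP a e : reflect (exists2 c, (c != ord0) && ancb c a & e = [set c; par c])
  (e \in path_edges par a).
Proof.
apply: (iffP imsetP) => [[c hc ->] | [c hc ->]]; exists c => //; first by move: hc; rewrite inE.
by rewrite inE.
Qed.

Lemma desc_anc a d : a != ord0 -> (d \in desc par a) = ancb a d.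
Proof.
move=> a0; rewrite inE; apply/idP/idP.
  move/fintype.subsetP => S.
  have : [set a; par a] \in path_edges par a.
    by apply/path_edgesP; exists a => //; rewrite a0 /=; apply/ancP/anc_refl.
  by move/S/path_edgesP => [c /andP[c0 hc] e]; rewrite (edge_inj a0 c0 e).
move=> h; apply/fintype.subsetP => e /path_edgesP [c /andP[c0 hc] ->].
apply/path_edgesP; exists c => //; rewrite c0 /=; apply/ancP.
exact: anc_trans (ancP _ _ hc) (ancP _ _ h).
Qed.

Lemma root_notin_desc a : a != ord0 -> ord0 \notin desc par a.
Proof.
move=> a0; rewrite desc_anc //; apply/negP => /ancP/anc_root e.
by rewrite e eqxx in a0.
Qed.

Lemma is_parentP b a : is_parent par b a -> a != ord0 /\ par a = b.
Proof.
rewrite /is_parent /tedge => /andP[/orP[/andP[a0 /eqP pa] | /andP[b0 /eqP pb]] ad] //.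
exfalso; rewrite desc_anc // in ad.
have e := anc_antisym (ancP _ _ ad) (ltac:(rewrite -pb; exact: anc_par) : anc a b).
by move: b0; rewrite -(par_fix (etrans pb e)) eqxx.
Qed.

Lemma sib_eq m m' x : m != ord0 -> m' != ord0 -> par m = par m' ->
  anc m x -> anc m' x -> m = m'.
Proof.
move=> m0 m'0 pm hm hm'.
have key : forall y z, y != ord0 -> par y = par z -> anc y z -> y = z.
  move=> y z y0 pyz h; case: (anc_step h) => // h'.
  rewrite -pyz in h'; have e := anc_antisym h' (anc_par y).
  by move: y0; rewrite -(par_fix e) eqxx.
case: (anc_chain hm hm') => h; first exact: key.
by apply/esym/key => //.
Qed.

Lemma ancb_step c a : c != a -> ancb c a = ancb c (par a).
Proof.
move=> ca; apply/ancP/ancP => h; last exact: anc_trans h (anc_par a).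
by case: (anc_step h) => // e; rewrite e eqxx in ca.
Qed.

Lemma ancb_refl a : ancb a a. Proof. exact/ancP/anc_refl. Qed.

Lemma ancb_par_false a : a != ord0 -> ancb a (par a) = false.
Proof. by move=> a0; apply/negbTE/negP => /ancP; apply: not_anc_par. Qed.

Section Lap.
Variable R : realType.
Variable w : 'I_n.+1 -> 'I_n.+1 -> R.
Hypothesis wsym : forall a b, w a b = w b a.
Hypothesis wpos : forall a b, tedge par a b -> w a b != 0.

Definition rho a d : R :=
  \sum_(c | (c != ord0) && ancb c a && ancb c d) w c (par c).

Lemma rho_root d : rho ord0 d = 0.
Proof.
rewrite /rho big1 // => c /andP[/andP[c0 /ancP/anc_root e] _].
by rewrite e eqxx in c0.
Qed.

Lemma rho_par a d : a != ord0 -> rho a d = w a (par a) * (ancb a d)%:R + rho (par a) d.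
Proof.
move=> a0; rewrite /rho big_mkcond [X in _ = _ + X]big_mkcond /=.
rewrite (bigD1 a) //= [X in _ = _ + X](bigD1 a) //= a0 ancb_refl ancb_par_false //=.
rewrite add0r; congr (_ + _).
  by case: (ancb a d); rewrite ?mulr1 ?mulr0.
by apply: eq_bigr => c ca; rewrite ancb_step.
Qed.

Lemma tedge_irr u : tedge par u u = false.
Proof.
rewrite /tedge orbb; apply/negP => /andP[u0 /eqP/par_fix e].
by rewrite e eqxx in u0.
Qed.

Lemma lap_row u (f : 'I_n.+1 -> R) :
  \sum_k laplacian par w u k * f k =
  \sum_(m | tedge par u m) (w u m)^-1 * (f u - f m).
Proof.
under eq_bigr => k _ do rewrite /laplacian mxE.
rewrite (bigD1 u) //= eqxx.
rewrite [X in _ + X](eq_bigr (fun k => if tedge par u k then - (w u k)^-1 * f k else 0)); last first.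
  by move=> k ku /=; rewrite eqtype.eq_sym (negbTE ku); case: ifP => //; rewrite mul0r.
rewrite -big_mkcondr.
rewrite [X in _ + X](eq_bigl (fun k => tedge par u k)); last first.
  by move=> k; case: (eqVneq k u) => [->|]; rewrite ?tedge_irr ?andbF ?andbT.
rewrite mulr_suml -big_split /=; apply: eq_bigr => m _; ring.
Qed.

Lemma child_sum u d : u != ord0 ->
  \sum_(m | (m != ord0) && (par m == u)) (ancb m d)%:R = ((ancb u d) && (u != d))%:R :> R.
Proof.
move=> u0; case: (boolP (ancb u d && (u != d))) => [/andP[/ancP[k hk] ud] | h].
  case: k hk => [|k] hk; first by rewrite -hk eqxx in ud.
  set m0 := iter k par d.
  have pm0 : par m0 = u by rewrite /m0 -iterS.
  have m00 : m0 != ord0.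
    by apply/eqP => e; move: u0; rewrite -pm0 e par0 eqxx.
  rewrite (bigD1 m0) /=; last by rewrite m00 pm0 eqxx.
  have -> : ancb m0 d by apply/ancP; exists k.
  rewrite big1 ?addr0 // => m /andP[/andP[m0' /eqP pm] nm].
  case: (boolP (ancb m d)) => // /ancP hm.
  have e : m = m0 by apply: (sib_eq m0' m00 _ hm); [rewrite pm pm0 | exists k].
  by rewrite e eqxx in nm.
rewrite big1 // => m /andP[m0 /eqP pm].
case: (boolP (ancb m d)) => // /ancP hm.
exfalso; apply: (negP h); apply/andP; split.
  by apply/ancP; apply: anc_trans hm; rewrite -pm; apply: anc_par.
apply/eqP => ud; rewrite -ud in hm.
have e := anc_antisym hm (ltac:(rewrite -pm; exact: anc_par) : anc u m).
have pu : par u = u by rewrite {1}e pm.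
by move: u0; rewrite -(par_fix pu) eqxx.
Qed.

Lemma lap_rho u d : u != ord0 ->
  \sum_(m | tedge par u m) (w u m)^-1 * (rho u d - rho m d) = (u == d)%:R.
Proof.
move=> u0.
have tpar : tedge par u (par u) by rewrite /tedge u0 eqxx.
rewrite (bigD1 (par u)) //=.
have -> : (w u (par u))^-1 * (rho u d - rho (par u) d) = (ancb u d)%:R.
  by rewrite rho_par // addrK mulrA mulVf ?mul1r // wpos.
rewrite (eq_bigl (fun m => (m != ord0) && (par m == u))); last first.
  move=> m; rewrite /tedge u0 /=.
  case: (eqVneq (par u) m) => [e|ne] /=; last by rewrite andbT.
  apply/esym/negbTE/negP => /andP[m0 /eqP pm].
  have : iter 2 par u = u by rewrite /= e pm.
  by move/(periodic_root (isT : (0 < 2)%N)) => e'; rewrite e' eqxx in u0.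
rewrite (eq_bigr (fun m => - (ancb m d)%:R)); last first.
  move=> m /andP[m0 /eqP pm].
  have tm : tedge par u m by rewrite /tedge pm m0 eqxx orbT.
  have -> : rho u d - rho m d = - (w u m * (ancb m d)%:R).
    by rewrite (rho_par _ m0) pm (wsym m u); ring.
  rewrite mulrN mulrA mulVf ?mul1r //.
  exact: wpos.
rewrite sumrN child_sum //.
case: (eqVneq u d) => [<-|ne]; first by rewrite ancb_refl ?eqxx /= subr0.
by rewrite ?ne andbT subrr.
Qed.

Definition Mrho : 'M[R]_n := \matrix_(i, j) rho (lift ord0 i) (lift ord0 j).

Lemma red_lap_inv : red_laplacian par w *m Mrho = 1%:M.
Proof.
apply/matrixP => i j; rewrite mxE [RHS]mxE.
transitivity (\sum_k laplacian par w (lift ord0 i) k * rho k (lift ord0 j)).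
  by rewrite big_ord_recl rho_root mulr0 add0r; apply: eq_bigr => k _; rewrite !mxE.
rewrite lap_row lap_rho; last by rewrite eqtype.eq_sym neq_lift.
by rewrite (inj_eq lift_inj).
Qed.

Lemma invmx_red_lap : invmx (red_laplacian par w) = Mrho.
Proof.
have e := red_lap_inv; have [Hu _] := mulmx1_unit e.
by rewrite -[invmx _]mulmx1 -e mulmxA mulVmx // mul1mx.
Qed.

Lemma coef_rho a j :
  (match unlift ord0 a with Some i => invmx (red_laplacian par w) i j | None => 0 end)
  = rho a (lift ord0 j).
Proof.
by case: unliftP => [i ->|->]; [rewrite invmx_red_lap mxE | rewrite rho_root].
Qed.

End Lap.
End Tree.

Section Prob.
Variables (R : realType) (dT : measure_display) (T : measurableType dT) (P : probability T R).

Let p12 : (1%:E <= (2%:R)%:E :> \bar R)%E.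
Proof. by rewrite lee_fin ler1n. Qed.

Definition Cr (X Y : T -> R) : R := fine (covariance P X Y).

Lemma L2_L1 X : X \in Lfun P 2%:E -> X \in Lfun P 1.
Proof.
have Pfin : P setT \is a fin_num := fin_num_measure P _ measurableT.
by move=> hX; apply: (Lfun_subset12 Pfin hX).
Qed.

Lemma CrE X Y : X \in Lfun P 2%:E -> Y \in Lfun P 2%:E -> covariance P X Y = (Cr X Y)%:E.
Proof.
move=> hX hY; rewrite /Cr fineK //.
apply: covariance_fin_num; [exact: L2_L1 | exact: L2_L1 | exact: (Lfun2_mul_Lfun1 hX hY)].
Qed.

Lemma CrDl X Y Z : X \in Lfun P 2%:E -> Y \in Lfun P 2%:E -> Z \in Lfun P 2%:E ->
  Cr (X + Y) Z = Cr X Z + Cr Y Z.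
Proof.
move=> hX hY hZ; rewrite {1}/Cr (_ : X + Y = X \+ Y) // covarianceDl //.
by rewrite (CrE hX hZ) (CrE hY hZ) -EFinD.
Qed.

Lemma CrZl a X Y : X \in Lfun P 2%:E -> Y \in Lfun P 2%:E ->
  Cr (a \o* X) Y = a * Cr X Y.
Proof.
move=> hX hY; rewrite {1}/Cr covarianceZl; [|exact: L2_L1 | exact: L2_L1 | exact: (Lfun2_mul_Lfun1 hX hY)].
by rewrite (CrE hX hY) -EFinM.
Qed.

Lemma CrC X Y : Cr X Y = Cr Y X.
Proof. by rewrite /Cr covarianceC. Qed.

Lemma Cr_cstl c Y : Cr (cst c) Y = 0.
Proof. by rewrite /Cr covariance_cst_l. Qed.

Lemma scale_L2 a X : X \in Lfun P 2%:E -> a \o* X \in Lfun P 2%:E.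
Proof. by move=> hX; apply: Lfun_scale => //; rewrite ler1n. Qed.

Lemma Cr_suml (I : Type) (s : seq I) (F : I -> T -> R) Y :
  (forall i, F i \in Lfun P 2%:E) -> Y \in Lfun P 2%:E ->
  Cr (\sum_(i <- s) F i) Y = \sum_(i <- s) Cr (F i) Y.
Proof.
move=> hF hY; elim: s => [|i s IH].
  by rewrite !big_nil (_ : 0 = cst 0) // Cr_cstl.
have Ls : \sum_(j <- s) F j \in Lfun P 2%:E.
  by apply: rpred_sum => j _; apply: hF.
by rewrite !big_cons CrDl ?IH.
Qed.

Variable n : nat.
Variables U W : 'I_n -> T -> R.
Hypothesis hU : forall j, U j \in Lfun P 2%:E.
Hypothesis hW : forall j, W j \in Lfun P 2%:E.

Definition lin (al be : 'I_n -> R) (c : R) : T -> R :=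
  \sum_(j < n) (al j \o* U j) + \sum_(j < n) (be j \o* W j) + cst c.

Lemma lin_L2 al be c : lin al be c \in Lfun P 2%:E.
Proof.
rewrite /lin; apply: rpredD; last exact: Lfun_cst.
by apply: rpredD; apply: rpred_sum => j _; apply: scale_L2.
Qed.

Lemma linE al be c t :
  lin al be c t = \sum_(j < n) al j * U j t + \sum_(j < n) be j * W j t + c.
Proof. by rewrite /lin !addrfctE !fct_sumE /=; congr (_ + _ + _); apply: eq_bigr => j _; rewrite mulrC. Qed.

Lemma linB al be c al' be' c' :
  lin al be c \- lin al' be' c' =
  lin (fun j => al j - al' j) (fun j => be j - be' j) (c - c').
Proof.
apply/funext => t /=; rewrite !linE.
under [in RHS]eq_bigr do rewrite mulrBl.
under [X in _ = _ + X + _]eq_bigr do rewrite mulrBl.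
rewrite !sumrB; ring.
Qed.

Lemma Cr_lin_l al be c Y : Y \in Lfun P 2%:E ->
  Cr (lin al be c) Y = \sum_j al j * Cr (U j) Y + \sum_j be j * Cr (W j) Y.
Proof.
move=> hY.
have sU : forall j, al j \o* U j \in Lfun P 2%:E by move=> j; apply: scale_L2.
have sW : forall j, be j \o* W j \in Lfun P 2%:E by move=> j; apply: scale_L2.
have hA : \sum_j (al j \o* U j) \in Lfun P 2%:E by apply: rpred_sum => j _.
have hB : \sum_j (be j \o* W j) \in Lfun P 2%:E by apply: rpred_sum => j _.
have hc : cst c \in Lfun P 2%:E by apply: Lfun_cst.
have hAB : \sum_j (al j \o* U j) + \sum_j (be j \o* W j) \in Lfun P 2%:E by apply: rpredD.
rewrite /lin (CrDl hAB hc hY) Cr_cstl addr0 (CrDl hA hB hY) !Cr_suml //.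
by congr (_ + _); apply: eq_bigr => j _; rewrite CrZl.
Qed.

Lemma Cr_lin_r al be c X : X \in Lfun P 2%:E ->
  Cr X (lin al be c) = \sum_j al j * Cr X (U j) + \sum_j be j * Cr X (W j).
Proof.
move=> hX; rewrite CrC Cr_lin_l //.
by congr (_ + _); apply: eq_bigr => j _; rewrite CrC.
Qed.

Hypothesis hUU : forall j k, j != k -> Cr (U j) (U k) = 0.
Hypothesis hWW : forall j k, j != k -> Cr (W j) (W k) = 0.
Hypothesis hWU : forall j k, j != k -> Cr (W j) (U k) = 0.

Lemma sum_diag (f : 'I_n -> R) j : (forall k, k != j -> f k = 0) -> \sum_k f k = f j.
Proof. by move=> h; rewrite (bigD1 j) //= big1 ?addr0 // => k /h. Qed.

Lemma Cr_U_lin j ga de c' :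
  Cr (U j) (lin ga de c') = ga j * Cr (U j) (U j) + de j * Cr (U j) (W j).
Proof.
rewrite Cr_lin_r // (sum_diag (j := j) (f := fun k => ga k * Cr (U j) (U k))); last first.
  by move=> k kj; rewrite hUU 1?eqtype.eq_sym // mulr0.
rewrite (sum_diag (j := j) (f := fun k => de k * Cr (U j) (W k))) //.
by move=> k kj; rewrite CrC hWU // mulr0.
Qed.

Lemma Cr_W_lin j ga de c' :
  Cr (W j) (lin ga de c') = ga j * Cr (W j) (U j) + de j * Cr (W j) (W j).
Proof.
rewrite Cr_lin_r // (sum_diag (j := j) (f := fun k => ga k * Cr (W j) (U k))); last first.
  by move=> k kj; rewrite hWU 1?eqtype.eq_sym // mulr0.
rewrite (sum_diag (j := j) (f := fun k => de k * Cr (W j) (W k))) //.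
by move=> k kj; rewrite hWW 1?eqtype.eq_sym // mulr0.
Qed.

Lemma Cr_lin al be c ga de c' :
  Cr (lin al be c) (lin ga de c') =
  \sum_j (al j * ga j * Cr (U j) (U j) + (al j * de j + be j * ga j) * Cr (U j) (W j)
          + be j * de j * Cr (W j) (W j)).
Proof.
rewrite Cr_lin_l ?lin_L2 //.
under eq_bigr => j _ do rewrite Cr_U_lin.
under [X in _ + X]eq_bigr => j _ do rewrite Cr_W_lin.
rewrite -big_split /=; apply: eq_bigr => j _; rewrite (CrC (W j) (U j)); ring.
Qed.

End Prob.

Lemma phiE_cov (R : realType) (dT : measure_display) (T : measurableType dT)
  (P : probability T R) (V : Type) (X Y : V -> T -> R) a b :
  X a \in Lfun P 1 -> X b \in Lfun P 1 -> Y a \in Lfun P 1 -> Y b \in Lfun P 1 ->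
  phiE P X Y a b = covariance P (X a \- X b) (Y a \- Y b).
Proof.
move=> ha hb ka kb.
rewrite /phiE covariance.unlock !expectationB // !fineB ?expectation_fin_num //.
congr expectation; apply/funext => t; rewrite /centred.
have mE : forall f g : T -> R, (f * g) t = f t * g t by [].
by rewrite !mE /=; ring.
Qed.

Lemma lift0_neq (n : nat) (j : 'I_n) : lift ord0 j != ord0.
Proof. by rewrite eqtype.eq_sym neq_lift. Qed.

Section Model.
Variables (R : realType) (n : nat) (par : 'I_n.+1 -> 'I_n.+1).
Variables (r x : 'I_n.+1 -> 'I_n.+1 -> R).
Variables (dT : measure_display) (T : measurableType dT) (P : probability T R).
Variables (p q : 'I_n.+1 -> T -> R) (v0 th0 : R).
Hypothesis par0 : par ord0 = ord0.
Hypothesis reach : forall a, exists k, iter k par a = ord0.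
Hypothesis rsym : forall a b, r a b = r b a.
Hypothesis xsym : forall a b, x a b = x b a.
Hypothesis rnz : forall a b, tedge par a b -> r a b != 0.
Hypothesis xnz : forall a b, tedge par a b -> x a b != 0.
Hypothesis hpq : forall a, a != ord0 -> p a \in Lfun P 2%:E /\ q a \in Lfun P 2%:E.
Hypothesis hcov : forall a b, a != ord0 -> b != ord0 -> a != b ->
     [/\ Omega P p p a b = 0%E, Omega P q q a b = 0%E & Omega P q p a b = 0%E].

Definition U j := p (lift ord0 j).
Definition W j := q (lift ord0 j).

Lemma hU j : U j \in Lfun P 2%:E. Proof. exact: (hpq (lift0_neq j)).1. Qed.
Lemma hW j : W j \in Lfun P 2%:E. Proof. exact: (hpq (lift0_neq j)).2. Qed.

Lemma hcov' (j k : 'I_n) : j != k ->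
  [/\ Cr P (U j) (U k) = 0, Cr P (W j) (W k) = 0 & Cr P (W j) (U k) = 0].
Proof.
move=> jk; have [h1 h2 h3] := hcov (lift0_neq j) (lift0_neq k) (ltac:(by rewrite (inj_eq lift_inj))).
by rewrite /Cr /U /W; move: h1 h2 h3; rewrite /Omega => -> -> ->.
Qed.

Lemma hUU j k : j != k -> Cr P (U j) (U k) = 0. Proof. by case/hcov'. Qed.
Lemma hWW j k : j != k -> Cr P (W j) (W k) = 0. Proof. by case/hcov'. Qed.
Lemma hWU j k : j != k -> Cr P (W j) (U k) = 0. Proof. by case/hcov'. Qed.

Definition rv a j := rho par r a (lift ord0 j).
Definition rx a j := rho par x a (lift ord0 j).

Lemma v_lin a : lcpf_v par r x p q v0 a = lin U W (rv a) (rx a) (if a == ord0 then v0 else 0).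
Proof.
apply/funext => t; rewrite linE /lcpf_v; case: unliftP => [i ->|->] /=.
  rewrite addr0; congr (_ + _); apply: eq_bigr => j _;
  by rewrite /rv /rx ?(invmx_red_lap par0 reach rsym rnz) ?(invmx_red_lap par0 reach xsym xnz) mxE.
by rewrite !big1 ?add0r // => j _; rewrite /rv /rx rho_root // mul0r.
Qed.

Lemma th_lin a : lcpf_theta par r x p q th0 a =
  lin U W (rx a) (fun j => - rv a j) (if a == ord0 then th0 else 0).
Proof.
apply/funext => t; rewrite linE /lcpf_theta; case: unliftP => [i ->|->] /=.
  rewrite addr0 -sumrN; congr (_ + _); apply: eq_bigr => j _;
  by rewrite /rv /rx ?(invmx_red_lap par0 reach rsym rnz) ?(invmx_red_lap par0 reach xsym xnz) mxE ?mulNr.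
by rewrite !big1 ?add0r // => j _; rewrite /rv /rx rho_root // ?oppr0 mul0r.
Qed.

Definition Cp j := Cr P (U j) (U j).
Definition Cpq j := Cr P (U j) (W j).
Definition Cq j := Cr P (W j) (W j).

Lemma lin_L1 al be c : lin U W al be c \in Lfun P 1.
Proof. exact/L2_L1/lin_L2/hW/hU. Qed.

Lemma phi_gen al be c al' be' c' ga de e ga' de' e' :
  covariance P (lin U W al be c \- lin U W al' be' c') (lin U W ga de e \- lin U W ga' de' e') =
  (\sum_j ((al j - al' j) * (ga j - ga' j) * Cp j
     + ((al j - al' j) * (de j - de' j) + (be j - be' j) * (ga j - ga' j)) * Cpq j
     + (be j - be' j) * (de j - de' j) * Cq j))%:E.
Proof.
rewrite !linB CrE ?lin_L2 //; try exact: hU; try exact: hW.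
by rewrite Cr_lin //; [exact: hU | exact: hW | exact: hUU | exact: hWW | exact: hWU].
Qed.

Lemma phi_vv a g : phiE P (lcpf_v par r x p q v0) (lcpf_v par r x p q v0) a g =
  (\sum_j ((rv a j - rv g j) * (rv a j - rv g j) * Cp j
     + ((rv a j - rv g j) * (rx a j - rx g j) + (rx a j - rx g j) * (rv a j - rv g j)) * Cpq j
     + (rx a j - rx g j) * (rx a j - rx g j) * Cq j))%:E.
Proof. by rewrite phiE_cov ?v_lin ?lin_L1 // phi_gen. Qed.

Lemma phi_tt a g : phiE P (lcpf_theta par r x p q th0) (lcpf_theta par r x p q th0) a g =
  (\sum_j ((rx a j - rx g j) * (rx a j - rx g j) * Cp j
     + ((rx a j - rx g j) * (- rv a j - - rv g j) + (- rv a j - - rv g j) * (rx a j - rx g j)) * Cpq j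
     + (- rv a j - - rv g j) * (- rv a j - - rv g j) * Cq j))%:E.
Proof. by rewrite phiE_cov ?th_lin ?lin_L1 // phi_gen. Qed.

Lemma phi_vt a g : phiE P (lcpf_v par r x p q v0) (lcpf_theta par r x p q th0) a g =
  (\sum_j ((rv a j - rv g j) * (rx a j - rx g j) * Cp j
     + ((rv a j - rv g j) * (- rv a j - - rv g j) + (rx a j - rx g j) * (rx a j - rx g j)) * Cpq j
     + (rx a j - rx g j) * (- rv a j - - rv g j) * Cq j))%:E.
Proof. by rewrite phiE_cov ?v_lin ?th_lin ?lin_L1 // phi_gen. Qed.

End Model.

Ltac efold := rewrite -?EFinM -?EFinB -?EFinD -?EFinM -?EFinB -?EFinD -?EFinM -?EFinB -?EFinD.

Lemma sum_set (R : realType) (n : nat) (A : {set 'I_n.+1}) (f : 'I_n.+1 -> R) :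
  ord0 \notin A ->
  (\sum_(d in A) (f d)%:E = (\sum_(j < n) (lift ord0 j \in A)%:R * f (lift ord0 j))%:E)%E.
Proof.
move=> A0; rewrite sumEFin; congr EFin.
rewrite big_mkcond big_ord_recl (negbTE A0) /= add0r.
by apply: eq_bigr => j _; case: (_ \in A); rewrite ?mul1r ?mul0r.
Qed.

Lemma mem_ne0 (n : nat) (A : {set 'I_n.+1}) d : ord0 \notin A -> d \in A -> d != ord0.
Proof. by move=> A0 hd; apply/eqP => e; rewrite -e hd in A0. Qed.

Lemma delta_rho (R : realType) (n : nat) (par : 'I_n.+1 -> 'I_n.+1)
  (par0 : par ord0 = ord0) (reach : forall a, exists k, iter k par a = ord0)
  (w : 'I_n.+1 -> 'I_n.+1 -> R) a b (j : 'I_n) :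
  a != ord0 -> par a = b ->
  rho par w a (lift ord0 j) = rho par w b (lift ord0 j) + w a b * (ancb par a (lift ord0 j))%:R.
Proof. by move=> a0 <-; rewrite (rho_par par0 reach w _ a0) addrC. Qed.

Lemma anc_desc_trans (n : nat) (par : 'I_n.+1 -> 'I_n.+1)
  (par0 : par ord0 = ord0) (reach : forall a, exists k, iter k par a = ord0) a b d :
  par a = b -> ancb par a d ==> ancb par b d.
Proof.
move=> pa; apply/implyP => /(ancP par0 reach) h; apply/(ancP par0 reach).
have hba : anc par b a by rewrite -pa; apply: anc_par.
exact: anc_trans hba h.
Qed.

Lemma sib_disj (n : nat) (par : 'I_n.+1 -> 'I_n.+1)
  (par0 : par ord0 = ord0) (reach : forall a, exists k, iter k par a = ord0) a c b d :
  a != c -> a != ord0 -> c != ord0 -> par a = b -> par c = b ->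
  ~~ (ancb par a d && ancb par c d).
Proof.
move=> ac a0 c0 pa pc; apply/negP => /andP[/(ancP par0 reach) h1 /(ancP par0 reach) h2].
apply: (negP ac); apply/eqP; apply: (sib_eq par0 reach a0 c0 _ h1 h2).
by rewrite pa pc.
Qed.

Unset Implicit Arguments.

Theorem theorem6 (R : realType) (n : nat) (par : 'I_n.+1 -> 'I_n.+1)
  (r x : 'I_n.+1 -> 'I_n.+1 -> R)
  (dT : measure_display) (T : measurableType dT) (P : probability T R)
  (p q : 'I_n.+1 -> T -> R) (v0 th0 : R) :
  rooted_tree par ->
  root_deg_one par ->
  (forall a b, r a b = r b a) -> (forall a b, x a b = x b a) ->
  (forall a b, tedge par a b -> 0 < r a b) ->
  (forall a b, tedge par a b -> 0 < x a b) ->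
  (* random injections at non-root nodes, with finite second moments *)
  (forall a, a != ord0 -> p a \in Lfun P 2%:E /\ q a \in Lfun P 2%:E) ->
  (* covariance assumption *)
  (forall a b, a != ord0 -> b != ord0 -> a != b ->
     [/\ Omega P p p a b = 0%E, Omega P q q a b = 0%E & Omega P q p a b = 0%E]) ->
  (forall a, a != ord0 -> (0 <= Omega P q p a a)%E) ->
  let v := lcpf_v par r x p q v0 in
  let th := lcpf_theta par r x p q th0 in
  let Op := fun d => Omega P p p d d in
  let Oq := fun d => Omega P q q d d in
  let Opq := fun d => Omega P p q d d in
  (* part 1 *)
  (forall a b c, a != c -> is_parent par b a -> is_parent par b c ->
     phiE P v v a b =
       (\sum_(d in desc par a)
          ((r a b ^+ 2)%:E * Op d + (x a b ^+ 2)%:E * Oq d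
           + (2 * r a b * x a b)%:E * Opq d))%E
     /\
     phiE P v v a c =
       (\sum_(d in desc par a)
          ((r a b ^+ 2)%:E * Op d + (x a b ^+ 2)%:E * Oq d
           + (2 * r a b * x a b)%:E * Opq d)
        + \sum_(d in desc par c)
          ((r b c ^+ 2)%:E * Op d + (x b c ^+ 2)%:E * Oq d
           + (2 * r b c * x b c)%:E * Opq d))%E)
  /\
  (* part 2 *)
  (forall g b a c, a != c -> is_parent par g b ->
     is_parent par b a -> is_parent par b c ->
     [/\ (phiE P v v a g - phiE P v v c g =
            \sum_(d in desc par a)
              (Op d * (r a b ^+ 2 + 2 * r a b * r b g)%:E
               + Oq d * (x a b ^+ 2 + 2 * x a b * x b g)%:E
               + 2%:E * Opq d * (r a b * x a b + r b g * x a b + r a b * x b g)%:E)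
          - \sum_(d in desc par c)
              (Op d * (r c b ^+ 2 + 2 * r c b * r b g)%:E
               + Oq d * (x c b ^+ 2 + 2 * x c b * x b g)%:E
               + 2%:E * Opq d * (r c b * x c b + r b g * x c b + r c b * x b g)%:E))%E,
         (phiE P v v a g =
            \sum_(d in desc par a)
              (Op d * ((r a b + r b g) ^+ 2)%:E
               + 2%:E * Opq d * ((r a b + r b g) * (x a b + x b g))%:E
               + Oq d * ((x a b + x b g) ^+ 2)%:E)
          + \sum_(d in desc par b :\: desc par a)
              (Op d * (r b g ^+ 2)%:E + Oq d * (x b g ^+ 2)%:E
               + 2%:E * Opq d * (r b g * x b g)%:E))%E,
         (phiE P th th a g =
            \sum_(d in desc par a)
              (Op d * ((x a b + x b g) ^+ 2)%:E
               - 2%:E * Opq d * ((r a b + r b g) * (x a b + x b g))%:E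
               + Oq d * ((r a b + r b g) ^+ 2)%:E)
          + \sum_(d in desc par b :\: desc par a)
              (Op d * (x b g ^+ 2)%:E + Oq d * (r b g ^+ 2)%:E
               - 2%:E * Opq d * (r b g * x b g)%:E))%E
       & (phiE P v th a g =
            \sum_(d in desc par a)
              ((Op d - Oq d) * ((r a b + r b g) * (x a b + x b g))%:E
               + Opq d * ((x a b + x b g) ^+ 2)%:E
               - Opq d * ((r a b + r b g) ^+ 2)%:E)
          + \sum_(d in desc par b :\: desc par a)
              ((Op d - Oq d) * (r b g * x b g)%:E
               + Opq d * (x b g ^+ 2 - r b g ^+ 2)%:E))%E]).
Proof.
  move=> [par0 reach] _ rsym xsym rpos xpos hpq hcov _ v th Op Oq Opq.
have rnz : forall a b, tedge par a b -> r a b != 0 by move=> a b /rpos /lt0r_neq0.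
have xnz : forall a b, tedge par a b -> x a b != 0 by move=> a b /xpos /lt0r_neq0.
have OpE : forall d, d != ord0 -> Op d = (Cr P (p d) (p d))%:E.
  by move=> d d0; rewrite /Op /Omega CrE //; case: (hpq d d0).
have OqE : forall d, d != ord0 -> Oq d = (Cr P (q d) (q d))%:E.
  by move=> d d0; rewrite /Oq /Omega CrE //; case: (hpq d d0).
have OpqE : forall d, d != ord0 -> Opq d = (Cr P (p d) (q d))%:E.
  by move=> d d0; rewrite /Opq /Omega CrE //; case: (hpq d d0).
have PVV := phi_vv v0 par0 reach rsym xsym rnz xnz hpq hcov.
have PTT := phi_tt th0 par0 reach rsym xsym rnz xnz hpq hcov.
have PVT := phi_vt v0 th0 par0 reach rsym xsym rnz xnz hpq hcov.
split.
  move=> a b c ac /(is_parentP par0 reach) [a0 pa] /(is_parentP par0 reach) [c0 pc].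
  have A0 := root_notin_desc par0 reach a0.
  have C0 := root_notin_desc par0 reach c0.
  split.
    under eq_bigr => d hd do rewrite (OpE _ (mem_ne0 A0 hd)) (OqE _ (mem_ne0 A0 hd))
      (OpqE _ (mem_ne0 A0 hd)) -?EFinM -?EFinD.
    rewrite sum_set // /v PVV; congr EFin; apply: eq_bigr => j _.
    rewrite /rv /rx (desc_anc par0 reach _ a0) (delta_rho par0 reach r _ a0 pa) (delta_rho par0 reach x _ a0 pa).
    rewrite /Cp /Cpq /Cq /U /W /rv /rx.
    by case: (ancb par a (lift ord0 j)) => /=; ring.
  under eq_bigr => d hd do rewrite (OpE _ (mem_ne0 A0 hd)) (OqE _ (mem_ne0 A0 hd))
      (OpqE _ (mem_ne0 A0 hd)) -?EFinM -?EFinD.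
  under [X in (_ + X)%E]eq_bigr => d hd do rewrite (OpE _ (mem_ne0 C0 hd)) (OqE _ (mem_ne0 C0 hd))
      (OpqE _ (mem_ne0 C0 hd)) -?EFinM -?EFinD.
  rewrite !sum_set // -EFinD /v PVV; congr EFin; rewrite -big_split; apply: eq_bigr => j _ /=.
  rewrite (desc_anc par0 reach _ a0) (desc_anc par0 reach _ c0).
  rewrite /rv /rx (delta_rho par0 reach r _ a0 pa) (delta_rho par0 reach x _ a0 pa).
  rewrite (delta_rho par0 reach r _ c0 pc) (delta_rho par0 reach x _ c0 pc).
  rewrite /Cp /Cpq /Cq /U /W /rv /rx (rsym c b) (xsym c b).
  move: (sib_disj par0 reach (lift ord0 j) ac a0 c0 pa pc).
  by case: (ancb par a (lift ord0 j)); case: (ancb par c (lift ord0 j)) => //= _; ring.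
move=> g b a c ac /(is_parentP par0 reach) [b0 pb] /(is_parentP par0 reach) [a0 pa]
  /(is_parentP par0 reach) [c0 pc].
have A0 := root_notin_desc par0 reach a0.
have C0 := root_notin_desc par0 reach c0.
have BA0 : ord0 \notin desc par b :\: desc par a.
  by rewrite finset.in_setD negb_and (negbTE (root_notin_desc par0 reach b0)) orbT.
have dab := anc_desc_trans par0 reach _ pa.
have dcb := anc_desc_trans par0 reach _ pc.
have dac := sib_disj par0 reach _ ac a0 c0 pa pc.
split.
- under eq_bigr => d hd do [rewrite (OpE _ (mem_ne0 A0 hd)) (OqE _ (mem_ne0 A0 hd))
      (OpqE _ (mem_ne0 A0 hd)); efold].
  under [X in _ = (_ - X)%E]eq_bigr => d hd do [rewrite (OpE _ (mem_ne0 C0 hd)) (OqE _ (mem_ne0 C0 hd))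
      (OpqE _ (mem_ne0 C0 hd)); efold].
  rewrite !sum_set // -EFinB /v !PVV -EFinB; congr EFin; rewrite -!sumrB; apply: eq_bigr => j _ /=.
  rewrite (desc_anc par0 reach _ a0) (desc_anc par0 reach _ c0) /Cp /Cpq /Cq /U /W /rv /rx.
  rewrite (delta_rho par0 reach r _ a0 pa) (delta_rho par0 reach x _ a0 pa).
  rewrite (delta_rho par0 reach r _ c0 pc) (delta_rho par0 reach x _ c0 pc).
  rewrite (delta_rho par0 reach r _ b0 pb) (delta_rho par0 reach x _ b0 pb).
  move: (dab (lift ord0 j)) (dcb (lift ord0 j)) (dac (lift ord0 j)).
  by case: (ancb par a (lift ord0 j)); case: (ancb par b (lift ord0 j));
    case: (ancb par c (lift ord0 j)) => //= _ _ _; ring.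
- under eq_bigr => d hd do [rewrite (OpE _ (mem_ne0 A0 hd)) (OqE _ (mem_ne0 A0 hd))
      (OpqE _ (mem_ne0 A0 hd)); efold].
  under [X in (_ + X)%E]eq_bigr => d hd do [rewrite (OpE _ (mem_ne0 BA0 hd)) (OqE _ (mem_ne0 BA0 hd))
      (OpqE _ (mem_ne0 BA0 hd)); efold].
  rewrite !sum_set // -EFinD /v PVV; congr EFin; rewrite -big_split; apply: eq_bigr => j _ /=.
  rewrite finset.in_setD !(desc_anc par0 reach _ a0) (desc_anc par0 reach _ b0) /Cp /Cpq /Cq /U /W /rv /rx.
  rewrite (delta_rho par0 reach r _ a0 pa) (delta_rho par0 reach x _ a0 pa).
  rewrite (delta_rho par0 reach r _ b0 pb) (delta_rho par0 reach x _ b0 pb).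
  move: (dab (lift ord0 j)).
  by case: (ancb par a (lift ord0 j)); case: (ancb par b (lift ord0 j)) => //= _; ring.
- under eq_bigr => d hd do [rewrite (OpE _ (mem_ne0 A0 hd)) (OqE _ (mem_ne0 A0 hd))
      (OpqE _ (mem_ne0 A0 hd)); efold].
  under [X in (_ + X)%E]eq_bigr => d hd do [rewrite (OpE _ (mem_ne0 BA0 hd)) (OqE _ (mem_ne0 BA0 hd))
      (OpqE _ (mem_ne0 BA0 hd)); efold].
  rewrite !sum_set // -EFinD /th PTT; congr EFin; rewrite -big_split; apply: eq_bigr => j _ /=.
  rewrite finset.in_setD !(desc_anc par0 reach _ a0) (desc_anc par0 reach _ b0) /Cp /Cpq /Cq /U /W /rv /rx.
  rewrite (delta_rho par0 reach r _ a0 pa) (delta_rho par0 reach x _ a0 pa).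
  rewrite (delta_rho par0 reach r _ b0 pb) (delta_rho par0 reach x _ b0 pb).
  move: (dab (lift ord0 j)).
  by case: (ancb par a (lift ord0 j)); case: (ancb par b (lift ord0 j)) => //= _; ring.
- under eq_bigr => d hd do [rewrite (OpE _ (mem_ne0 A0 hd)) (OqE _ (mem_ne0 A0 hd))
      (OpqE _ (mem_ne0 A0 hd)); efold].
  under [X in (_ + X)%E]eq_bigr => d hd do [rewrite (OpE _ (mem_ne0 BA0 hd)) (OqE _ (mem_ne0 BA0 hd))
      (OpqE _ (mem_ne0 BA0 hd)); efold].
  rewrite !sum_set // -EFinD /v /th PVT; congr EFin; rewrite -big_split; apply: eq_bigr => j _ /=.
  rewrite finset.in_setD !(desc_anc par0 reach _ a0) (desc_anc par0 reach _ b0) /Cp /Cpq /Cq /U /W /rv /rx.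
  rewrite (delta_rho par0 reach r _ a0 pa) (delta_rho par0 reach x _ a0 pa).
  rewrite (delta_rho par0 reach r _ b0 pb) (delta_rho par0 reach x _ b0 pb).
  move: (dab (lift ord0 j)).
  by case: (ancb par a (lift ord0 j)); case: (ancb par b (lift ord0 j)) => //= _; ring.
Qed.
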